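(* Let $n,d\in\mathbb{N}$, $p\ge1$, $\Omega\subseteq\mathbb{R}^d$ compact, $z\in\mathbb{R}^d\setminus\Omega$. Let $a$ be uniform on $S^{d-1}$ and $b$ uniform on $S^{n-1}$, independently. For $X\in\mathcal{S}_{\le n}(\Omega)$ define $$S_z(X;a,b)=b\cdot\mathrm{sort}\big(a\cdot\rho_{(z)}(X)\big)\in\mathbb{R},$$ where $a\cdot\rho_{(z)}(X)\in\mathbb{R}^n$ is the vector of inner products of $a$ with the $n$ elements of $\rho_{(z)}(X)$ and $\mathrm{sort}$ sorts its entries in nondecreasing order. Then, with the metric $W_1^z$ on inputs and the absolute value on outputs, $S_z$ is uniformly Lipschitz and lower Lipschitz in expectation.
   Context: $\mathcal{S}_{\le n}(\Omega)$ is the set of multisets with at most $n$ elements from $\Omega$; $\rho_{(z)}$ pads a multiset with copies of $z$ to exactly $n$ elements; $W_1(\{\!\!\{ x_j\}\!\!\},\{\!\!\{ y_j\}\!\!\})=\min_{\tau\in S_n}\sum_j\|x_j-y_{\tau(j)}\|_1$ for $n$-element multisets and $W_1^z(S_1,S_2)=W_1(\rho_{(z)}(S_1),\rho_{(z)}(S_2))$. A parametric function $f(x;w)$ is uniformly Lipschitz if there is $L$ with $x\mapsto f(x;w)$ $L$-Lipschitz for all $w$; it is lower Lipschitz in expectation (for the given $p$) if there is $c>0$ with $c^p\le \mathbb{E}_{w}\left[\left(\frac{d_Y(f(x;w),f(x';w))}{d_X(x,x')}\right)^p\right]$ for all $x,x'$ with $d_X(x,x')>0$. *)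

(* Defs.v *)
From HB Require Import structures.
From mathcomp Require Import all_boot all_order all_algebra all_fingroup.
From mathcomp Require Import all_classical all_reals all_analysis.
Set Implicit Arguments. Unset Strict Implicit. Unset Printing Implicit Defensive.
Import Order.TTheory GRing.Theory Num.Theory.
Import numFieldNormedType.Exports.
Local Open Scope classical_set_scope.
Local Open Scope ring_scope.

Section Defs.
Variable R : realType.

Definition dotv (d : nat) (x y : 'rV[R]_d) : R := \sum_(k < d) x ord0 k * y ord0 k.
Definition enorm (d : nat) (x : 'rV[R]_d) : R := Num.sqrt (dotv x x).

Definition l1norm (d : nat) (x : 'rV[R]_d) : R := \sum_(k < d) `|x ord0 k|.

(** Multisets are represented by finite sequences (all notions below are
    invariant under permutation of the sequence).  S_{<= n}(Omega): *)
Definition multiset_le (d n : nat) (Omega : set 'rV[R]_d) (X : seq 'rV[R]_d) : Prop :=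
  (size X <= n)%N /\ (forall x, x \in X -> Omega x).

Definition pad (d n : nat) (z : 'rV[R]_d) (X : seq 'rV[R]_d) : seq 'rV[R]_d :=
  X ++ nseq (n - size X) z.

Definition W1cost (d n : nat) (z : 'rV[R]_d) (X Y : seq 'rV[R]_d) (s : 'S_n) : R :=
  \sum_(j < n) l1norm (nth z X j - nth z Y (s j)).
Definition W1 (d n : nat) (z : 'rV[R]_d) (X Y : seq 'rV[R]_d) : R :=
  \big[Num.min/W1cost z X Y (1%g : 'S_n)]_(s : 'S_n) W1cost z X Y s.
Definition W1z (d n : nat) (z : 'rV[R]_d) (X Y : seq 'rV[R]_d) : R :=
  W1 n z (pad n z X) (pad n z Y).

Definition Sz (d n : nat) (z : 'rV[R]_d) (X : seq 'rV[R]_d) (a : 'rV[R]_d) (b : 'rV[R]_n) : R :=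
  let s := path.sort <=%R [seq dotv a x | x <- pad n z X] in
  \sum_(i < n) b ord0 i * nth 0 s i.

Definition sphere (d : nat) : set 'rV[R]_d := [set a | enorm a = 1].

(** Lebesgue integral over R^d of a [0,+oo]-valued function, computed as the
    iterated one-dimensional Lebesgue integral (Tonelli). *)
Definition rcons_row (d : nat) (t : R) (y : 'rV[R]_d) : 'rV[R]_d.+1 :=
  \row_(i < d.+1) (if unlift ord0 i is Some j then y ord0 j else t).

Fixpoint lebRn (d : nat) : ('rV[R]_d -> \bar R) -> \bar R :=
  match d return ('rV[R]_d -> \bar R) -> \bar R with
  | 0 => fun g => g 0
  | d'.+1 => fun g =>
      (\int[@lebesgue_measure R]_(t in setT) lebRn (fun y => g (rcons_row t y)))%E
  end.

Definition ball_vol (d : nat) : \bar R :=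
  lebRn (fun x : 'rV[R]_d => if enorm x <= 1 then 1%E else 0%E).

(** Expectation of a nonnegative function of a, for a uniform on S^{d-1}
    (normalized surface measure = normalized cone measure:
     sigma(A) = lambda_d({t x | 0 <= t <= 1, x in A}) / lambda_d(B_d)). *)
Definition unif_sphere_E (d : nat) (h : 'rV[R]_d -> \bar R) : \bar R :=
  (lebRn (fun x : 'rV[R]_d => if (enorm x <= 1)%R then h ((enorm x)^-1 *: x) else 0%E)
   * ((fine (ball_vol d))^-1)%:E)%E.

Definition E_ab (d n : nat) (h : 'rV[R]_d -> 'rV[R]_n -> \bar R) : \bar R :=
  unif_sphere_E (fun a => unif_sphere_E (fun b => h a b)).

End Defs.

Arguments multiset_le {R d} n Omega X.
Arguments pad {R d} n z X.
Arguments W1 {R d} n z X Y.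
Arguments W1z {R d} n z X Y.
Arguments Sz {R d} n z X a b.
Arguments sphere {R} d a.
Arguments E_ab {R} d n h.

(* Main.v *)
Require Import Defs.
From HB Require Import structures.
From mathcomp Require Import all_boot all_order all_algebra all_fingroup.
From mathcomp Require Import all_classical all_reals all_analysis.
From mathcomp Require Import lra ring zify.
From Stdlib Require Import Lia.
Import Order.TTheory GRing.Theory Num.Theory.
Import numFieldNormedType.Exports.
Local Open Scope classical_set_scope.
Local Open Scope ring_scope.
Set Implicit Arguments. Unset Strict Implicit. Unset Printing Implicit Defensive.

Lemma le_int0 (R : realType) (f g : R -> \bar R) :
  (forall x, (0 <= f x)%E) -> (forall x, (f x <= g x)%E) ->
  (\int[@lebesgue_measure R]_(x in setT) f x <= \int[@lebesgue_measure R]_(x in setT) g x)%E.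
Proof.
move=> f0 fg; rewrite !ge0_integralTE //; last by move=> x; exact: le_trans (f0 x) (fg x).
apply/ge_ereal_sup => _ [h hf <-]; apply: ereal_sup_ubound; exists h => //.
by move=> x; exact: le_trans (hf x) (fg x).
Qed.

Lemma lebRn_ge0 (R : realType) d (f : 'rV[R]_d -> \bar R) :
  (forall x, (0 <= f x)%E) -> (0 <= lebRn f)%E.
Proof.
elim: d f => [|d IH] f f0 /=; first exact: f0.
by apply: integral_ge0 => t _; apply: IH => y; exact: f0.
Qed.

Lemma lebRn_le (R : realType) d (f g : 'rV[R]_d -> \bar R) :
  (forall x, (0 <= f x)%E) -> (forall x, (f x <= g x)%E) -> (lebRn f <= lebRn g)%E.
Proof.
elim: d f g => [|d IH] f g f0 fg /=; first exact: fg.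
apply: le_int0 => t; first by apply: lebRn_ge0 => y; exact: f0.
by apply: IH => y; [exact: f0 | exact: fg].
Qed.

Lemma lebRn0 (R : realType) d : lebRn (fun _ : 'rV[R]_d => 0%E) = 0%E.
Proof.
elim: d => [|d IH] //=.
rewrite (eq_integral (fun _ => 0%E)); first by rewrite integral0.
by move=> t _; rewrite IH.
Qed.

Definition inbox (R : realType) d (lo : 'rV[R]_d) (r : R) (x : 'rV[R]_d) : bool :=
  [forall k, (lo ord0 k <= x ord0 k <= lo ord0 k + r)].

Lemma rcons_row0 (R : realType) d (t : R) (y : 'rV[R]_d) : rcons_row t y ord0 ord0 = t.
Proof. by rewrite /rcons_row mxE unlift_none. Qed.

Lemma rcons_rowS (R : realType) d (t : R) (y : 'rV[R]_d) k :
  rcons_row t y ord0 (lift ord0 k) = y ord0 k.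
Proof. by rewrite /rcons_row mxE liftK. Qed.

Lemma inbox_rcons (R : realType) d (lo : 'rV[R]_d.+1) r t (y : 'rV[R]_d) :
  inbox lo r (rcons_row t y) =
  (lo ord0 ord0 <= t <= lo ord0 ord0 + r) && inbox (\row_k lo ord0 (lift ord0 k)) r y.
Proof.
apply/idP/idP.
  move=> /forallP H; apply/andP; split; first by have := H ord0; rewrite rcons_row0.
  by apply/forallP => k; have := H (lift ord0 k); rewrite rcons_rowS !mxE.
move=> /andP[H0 /forallP H]; apply/forallP => k.
case: (unliftP ord0 k) => [j ->|->]; last by rewrite rcons_row0.
by rewrite rcons_rowS; have := H j; rewrite !mxE.
Qed.

Lemma int_itv (R : realType) (a r K : R) : 0 <= r -> 
  (\int[@lebesgue_measure R]_(t in setT)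
     (if (a <= t <= a + r)%R then K%:E else 0%E) = (K * r)%:E)%E.
Proof.
move=> r0.
transitivity (\int[@lebesgue_measure R]_(x in `[a, (a + r)%R]) (cst K%:E) x)%E.
  rewrite [RHS]integral_mkcond; apply: eq_integral => t _.
  by rewrite /patch /= mem_setE in_itv /=.
rewrite integral_cst //= lebesgue_measure_itv /=.
case: ifPn => [_|].
  by rewrite -EFinD addrAC subrr add0r.
rewrite lte_fin -leNgt gerDl => rl; have -> : r = 0 by apply/le_anti/andP.
by rewrite mulr0 mule0.
Qed.

Lemma lebRn_box (R : realType) d (lo : 'rV[R]_d) (r K : R) : 0 <= r ->
  lebRn (fun x => if inbox lo r x then K%:E else 0%E) = (K * r ^+ d)%:E.
Proof.
elim: d lo K => [|d IH] lo K r0 /=.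
  by rewrite expr0 mulr1; have -> : inbox lo r 0 = true by apply/forallP => -[].
rewrite exprSr mulrA -(int_itv (lo ord0 ord0)) //; apply: eq_integral => t _.
have -> : (fun y => if inbox lo r (rcons_row t y) then K%:E else 0%E) =
  (fun y => if (lo ord0 ord0 <= t <= lo ord0 ord0 + r)%R then
     (if inbox (\row_k lo ord0 (lift ord0 k)) r y then K%:E else 0%E) else 0%E).
  by apply: funext => y /=; rewrite inbox_rcons; case: (lo ord0 ord0 <= t <= lo ord0 ord0 + r).
by case: ifP => _; [exact: IH | exact: lebRn0].
Qed.


Lemma dotv_ge_sq (R : realType) d (x : 'rV[R]_d) k : x ord0 k ^+ 2 <= dotv x x.
Proof.
rewrite /dotv (bigD1 k) //= expr2 lerDl; apply: sumr_ge0 => i _.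
by rewrite -expr2 sqr_ge0.
Qed.

Lemma dotv_ge0 (R : realType) d (x : 'rV[R]_d) : 0 <= dotv x x.
Proof. by apply: sumr_ge0 => i _; rewrite -expr2 sqr_ge0. Qed.

Lemma enorm_le1 (R : realType) d (x : 'rV[R]_d) : enorm x <= 1 -> forall k, `|x ord0 k| <= 1.
Proof.
move=> H0 k; have H : dotv x x <= 1 by move: H0; rewrite /enorm -{1}sqrtr1 ler_sqrt.
have := le_trans (dotv_ge_sq x k) H.
rewrite -real_normK ?num_real // expr2.
have := normr_ge0 (x ord0 k); set a := `|x ord0 k| => h0 h2.
nra.
Qed.

Lemma ball_vol_bounds (R : realType) m (lo : 'rV[R]_m) (r : R) : 0 < r ->
  (forall x, inbox lo r x -> enorm x <= 1) ->
  exists v : R, ball_vol R m = v%:E /\ r ^+ m <= v /\ v <= 2 ^+ m.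
Proof.
move=> r0 Hb.
have bvU : (ball_vol R m <= (1 * 2 ^+ m)%:E)%E.
  rewrite -(lebRn_box (const_mx (-1)) 1) //; apply: lebRn_le => x; first by case: ifP.
  case: ifP => [/enorm_le1 H|_]; last by case: ifP.
  have -> // : inbox (const_mx (-1)) 2 x.
  by apply/forallP => k; rewrite mxE; have := H k; rewrite ler_norml; lra.
have bvL : ((1 * r ^+ m)%:E <= ball_vol R m)%E.
  rewrite /ball_vol -(lebRn_box lo 1 (ltW r0)); apply: lebRn_le => x; first by case: ifP.
  by case: ifP => [/Hb ->|_] //; case: ifP.
move: bvU bvL; case: (ball_vol R m) => [v| |] //=; rewrite ?lee_fin !mul1r => h1 h2.
by exists v.
Qed.

Lemma unif_lb (R : realType) m (h : 'rV[R]_m -> \bar R) (lo : 'rV[R]_m) (r K : R) :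
  0 < r -> 0 <= K -> (forall x, (0 <= h x)%E) ->
  (forall x, inbox lo r x -> enorm x <= 1 /\ (K%:E <= h ((enorm x)^-1 *: x))%E) ->
  ((K * r ^+ m / 2 ^+ m)%:E <= unif_sphere_E h)%E.
Proof.
move=> r0 K0 h0 Hb.
have [v [bvE [vL vU]]] : exists v : R, ball_vol R m = v%:E /\ r ^+ m <= v /\ v <= 2 ^+ m.
  by apply: (ball_vol_bounds r0) => x /Hb[].
have G0 : forall x : 'rV[R]_m, (0 <= (if (enorm x <= 1)%R then h ((enorm x)^-1 *: x) else 0))%E.
  by move=> x; case: ifP.
have hb : ((K * r ^+ m)%:E <= lebRn (fun x : 'rV[R]_m =>
      if (enorm x <= 1)%R then h ((enorm x)^-1 *: x) else 0))%E.
  rewrite -(lebRn_box lo K (ltW r0)); apply: lebRn_le => x; first by case: ifP.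
  by case: ifP => // /Hb [-> H].
have v0 : 0 < v by apply: lt_le_trans vL; apply: exprn_gt0.
rewrite /unif_sphere_E bvE /= EFinM; apply: lee_pmul => //.
  by rewrite lee_fin mulr_ge0 // exprn_ge0 // ltW.
by rewrite lee_fin lef_pV2 // posrE exprn_gt0.
Qed.


Definition mx (R : realType) m (w : 'rV[R]_m) : R := \big[Num.max/0]_k `|w ord0 k|.

Lemma mx_ge (R : realType) m (w : 'rV[R]_m) k : `|w ord0 k| <= mx w.
Proof. exact: (le_bigmax 0 (fun k => `|w ord0 k|) k). Qed.

Lemma mx_ge0 (R : realType) m (w : 'rV[R]_m) : 0 <= mx w.
Proof. by apply: bigmax_ge_id. Qed.

Lemma mx_attained (R : realType) m (w : 'rV[R]_m.+1) : exists k, mx w = `|w ord0 k|.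
Proof.
by eexists; rewrite /mx (@bigmax_eq_arg _ _ _ 0 ord0) // => i _; apply: normr_ge0.
Qed.

Lemma card_bigcup_leq (T I : finType) (B : I -> {set T}) :
  (#|(\bigcup_(i : I) B i)%SET| <= \sum_(i : I) #|B i|)%N.
Proof.
elim/big_rec2: _ => [|i s U _ H]; first by rewrite cards0.
apply: leq_trans (leq_card_setU _ _).1 _.
by rewrite leq_add2l.
Qed.

Definition gh (R : realType) (m N : nat) : R := ((m.+1 * N.+2)%:R)^-1.
Definition gpt (R : realType) m N (g : {ffun 'I_m.+1 -> 'I_N.+1}) : 'rV[R]_m.+1 :=
  \row_k (((g k : nat)%:R + 1) * gh R m N).
Arguments gpt {R m N} g.
Definition grho (R : realType) m N : R := gh R m N / (4 * m.+1%:R).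
Definition gtau (R : realType) m N : R := gh R m N / 4.

Lemma gh_gt0 (R : realType) m N : 0 < gh R m N.
Proof. by rewrite /gh invr_gt0 ltr0n muln_gt0. Qed.

Lemma grho_gt0 (R : realType) m N : 0 < grho R m N.
Proof. by rewrite /grho divr_gt0 ?gh_gt0 // mulr_gt0 // ltr0n. Qed.

Lemma gtau_gt0 (R : realType) m N : 0 < gtau R m N.
Proof. by rewrite /gtau divr_gt0 ?gh_gt0. Qed.

Lemma gh_eq (R : realType) m N : gh R m N * (m.+1%:R * N.+2%:R) = 1.
Proof. by rewrite /gh -natrM mulVf // pnatr_eq0. Qed.

Lemma grho_eq (R : realType) m N : grho R m N * m.+1%:R = gtau R m N.
Proof. by rewrite /grho /gtau; field; rewrite addrC natr1 pnatr_eq0. Qed.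

Lemma gbox_coord (R : realType) m N (g : {ffun 'I_m.+1 -> 'I_N.+1}) (x : 'rV[R]_m.+1) :
  inbox (gpt g) (grho R m N) x -> forall k,
  gh R m N <= x ord0 k /\ x ord0 k <= (m.+1%:R)^-1 /\
  0 <= x ord0 k - gpt g ord0 k <= grho R m N.
Proof.
move=> /forallP Hx k; have := Hx k; rewrite !mxE => /andP[h1 h2].
have hp := gh_gt0 R m N; have rp := grho_gt0 R m N.
have gk : ((g k : nat)%:R : R) <= N%:R by rewrite ler_nat -ltnS.
have g0 : (0 : R) <= (g k : nat)%:R by [].
have he := gh_eq R m N.
have re : grho R m N * (4 * m.+1%:R) = gh R m N.
  by rewrite /grho mulfVK // mulf_neq0 // pnatr_eq0.
have m1 : (1 : R) <= m.+1%:R by rewrite ler1n.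
have hinv : (m.+1%:R : R)^-1 = gh R m N * N.+2%:R.
  by rewrite /gh natrM invfM -mulrA mulVf ?mulr1 // pnatr_eq0.
rewrite hinv -addn2 natrD.
split; [nra|split; [|lra]].
have : grho R m N <= gh R m N by nra.
move: h2; set gg := ((g k : nat)%:R : R); set hh := gh R m N; nra.
Qed.

Lemma gbox_norm (R : realType) m N (g : {ffun 'I_m.+1 -> 'I_N.+1}) (x : 'rV[R]_m.+1) :
  inbox (gpt g) (grho R m N) x -> 0 < enorm x <= 1.
Proof.
move=> Hx; have H := gbox_coord Hx; have hp := gh_gt0 R m N.
apply/andP; split.
  rewrite /enorm sqrtr_gt0; apply: lt_le_trans (dotv_ge_sq x ord0).
  have [h1 _] := H ord0; rewrite expr2; apply: mulr_gt0; lra.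
rewrite /enorm -sqrtr1; apply: ler_wsqrtr.
apply: le_trans (_ : \sum_(k < m.+1) (m.+1%:R : R)^-1 <= 1).
  apply: ler_sum => k _; have [h1 [h2 _]] := H k.
  have : (m.+1%:R : R)^-1 <= 1 by rewrite invf_le1 // ?ler1n.
  move: h1 h2; set y := x ord0 k; set c := (m.+1%:R : R)^-1 => h1 h2 h3.
  have y0 : 0 <= y by lra.
  rewrite -[c]mul1r; apply: ler_pM => //; lra.
by rewrite sumr_const card_ord -[X in X <= _]mulr_natr mulVf // pnatr_eq0.
Qed.

Lemma nat_dist1 (R : realType) (a b : nat) : a <> b -> (1 : R) <= `|a%:R - b%:R|.
Proof.
move=> ab; case: (ltngtP a b) => [lt|lt|e] //.
  rewrite distrC ger0_norm; last by rewrite subr_ge0 ler_nat ltnW.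
  have : (a.+1%:R : R) <= b%:R by rewrite ler_nat.
  rewrite -natr1; lra.
rewrite ger0_norm; last by rewrite subr_ge0 ler_nat ltnW.
have : (b.+1%:R : R) <= a%:R by rewrite ler_nat.
rewrite -natr1; lra.
Qed.

Lemma grid (R : realType) m N (I : finType) (w : I -> 'rV[R]_m.+1) : (#|I| <= N)%N ->
  exists g : {ffun 'I_m.+1 -> 'I_N.+1}, forall x, inbox (gpt g) (grho R m N) x ->
    forall i, gtau R m N * mx (w i) <= `|dotv x (w i)|.
Proof.
move=> cardI.
have hp := gh_gt0 R m N.
pose bad i := [set g : {ffun 'I_m.+1 -> 'I_N.+1} |
   `|dotv (gpt g) (w i)| < gh R m N / 2 * mx (w i)]%SET.
have cardB i : (#|bad i| <= N.+1 ^ m)%N.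
  have [k0 Hk0] := mx_attained (w i).
  pose phi (g : {ffun 'I_m.+1 -> 'I_N.+1}) := [ffun j : 'I_m => g (lift k0 j)].
  rewrite -(@card_in_imset _ _ phi); last first.
    move=> g g'; rewrite !inE => Hg Hg' /ffunP eqg; apply/ffunP => k.
    have eqk : forall k, k != k0 -> g k = g' k.
      move=> k1; case: (unliftP k0 k1) => [j ->|->]; last by rewrite eqxx.
      by move=> _; have := eqg j; rewrite !ffunE.
    case: (eqVneq k k0) => [->|]; last exact: eqk.
    apply/eqP/negPn/negP => /eqP neq.
    have diff : dotv (gpt g) (w i) - dotv (gpt g') (w i) =
       (((g k0 : nat)%:R - (g' k0 : nat)%:R) * gh R m N) * w i ord0 k0.
      rewrite /dotv -sumrB (bigD1 k0) //= big1 ?addr0; first by rewrite !mxE; ring.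
      by move=> k1 /eqk e; rewrite !mxE e subrr.
    have n1 := nat_dist1 R (fun e => neq (val_inj e)).
    have : gh R m N * mx (w i) <= `|dotv (gpt g) (w i) - dotv (gpt g') (w i)|.
      rewrite diff !normrM Hk0 (gtr0_norm hp); apply: ler_pM => //.
        exact: ltW.
      by rewrite -[X in X <= _]mul1r; apply: ler_pM => //; rewrite ltW.
    have := ler_normB (dotv (gpt g) (w i)) (dotv (gpt g') (w i)).
    move: Hg Hg'; have -> : gh R m N / 2 * mx (w i) = (gh R m N * mx (w i)) / 2 by rewrite mulrAC.
    set P := gh R m N * mx (w i); lra.
  apply: leq_trans (max_card _) _; by rewrite card_ffun !card_ord.
have : ~~ ([set: {ffun 'I_m.+1 -> 'I_N.+1}]%SET \subset (\bigcup_(i : I) bad i)%SET).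
  apply/negP => /subset_leq_card; rewrite cardsT card_ffun !card_ord => H.
  have := leq_trans H (card_bigcup_leq bad).
  have H1 : (\sum_(i : I) #|bad i| <= \sum_(i : I) N.+1 ^ m)%N.
    by apply: leq_sum => i _; exact: cardB.
  rewrite sum_nat_const in H1 => H2; have H3 := leq_trans H2 H1.
  have e0 : (0 < N.+1 ^ m)%N by rewrite expn_gt0.
  move: H3; rewrite expnS; set e := (N.+1 ^ m)%N => H3.
  move: H3; rewrite -/(#|I|) => H3; nia.
case/subsetPn => g _ Hg; exists g => x Hx i.
have gi : g \notin bad i.
  by apply: contra Hg => Hgi; apply/bigcupP; exists i.
rewrite inE -leNgt in gi.
have Hc := gbox_coord Hx.
have hM := mx_ge0 (w i).
have Hd : `|dotv x (w i) - dotv (gpt g) (w i)| <= gtau R m N * mx (w i).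
  have -> : gtau R m N * mx (w i) = \sum_(k < m.+1) (grho R m N * mx (w i)).
    by rewrite sumr_const card_ord -mulr_natr -grho_eq; ring.
  rewrite /dotv -sumrB.
  apply: le_trans (ler_norm_sum _ _ _) _; apply: ler_sum => k _.
  rewrite -mulrBl normrM; have [_ [_ /andP[e1 e2]]] := Hc k.
  rewrite ger0_norm //; apply: ler_pM => //; exact: mx_ge.
have HB : `|dotv (gpt g) (w i)| <= `|dotv x (w i)| + `|dotv x (w i) - dotv (gpt g) (w i)|.
  rewrite distrC; have := ler_normD (dotv x (w i)) (dotv (gpt g) (w i) - dotv x (w i)).
  by rewrite addrC subrK.
move: HB Hd gi; rewrite /gtau.
have -> : gh R m N / 4 * mx (w i) = (gh R m N * mx (w i)) / 4 by rewrite mulrAC.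
have -> : gh R m N / 2 * mx (w i) = (gh R m N * mx (w i)) / 2 by rewrite mulrAC.
set A := `|dotv x (w i)|; set B := `|dotv (gpt g) (w i)|.
set C := `|dotv x (w i) - dotv (gpt g) (w i)|; set P := gh R m N * mx (w i).
lra.
Qed.


Definition pcost (R : realType) (P : seq (R * R)) : R := \sum_(p <- P) `|p.1 - p.2|.

Lemma exists_max (R : realType) (T : eqType) (f : T -> R) (s : seq T) :
  s != [::] -> exists2 p, p \in s & forall q, q \in s -> f q <= f p.
Proof.
elim: s => [//|a s IH] _.
case: (boolP (s == [::])) => [/eqP ->|].
  by exists a; rewrite ?mem_seq1 // => q; rewrite mem_seq1 => /eqP ->.
case: s IH => [//|b s] IH _.
have [p ps Hp] := IH isT.
case: (lerP (f a) (f p)) => [ap|pa].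
  exists p; first by rewrite in_cons ps orbT.
  by move=> q; rewrite in_cons => /orP[/eqP ->|/Hp].
exists a; first exact: mem_head.
move=> q; rewrite in_cons => /orP[/eqP ->//|/Hp qp]; exact: le_trans qp (ltW pa).
Qed.

Lemma sort_cons_max (R : realType) (s : seq R) x : all (fun y => y <= x) s ->
  sort <=%R (x :: s) = rcons (sort <=%R s) x.
Proof.
move=> Hs; apply: (sorted_eq le_trans (@le_anti _ R)).
- exact: (sort_sorted (@le_total _ R)).
- have : sorted <=%R (sort <=%R s) := sort_sorted (@le_total _ R) s.
  have : all (fun y => y <= x) (sort <=%R s) by rewrite all_sort.
  case: (sort <=%R s) => [//|a l] Hall Hp.
  move: Hp; rewrite /= rcons_path => -> /=.
  have : last a l \in a :: l by exact: mem_last.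
  by move/(allP Hall).
- by rewrite perm_sort perm_sym perm_rcons perm_cons perm_sort.
Qed.

Lemma pcost_rcons (R : realType) (P : seq (R * R)) p : pcost (rcons P p) = pcost P + `|p.1 - p.2|.
Proof. by rewrite /pcost -cats1 big_cat big_seq1. Qed.

Definition sortL_stmt (R : realType) (P : seq (R * R)) : Prop :=
  pcost (zip (sort <=%R (unzip1 P)) (sort <=%R (unzip2 P))) <= pcost P.

Lemma four_term (R : realType) (x y a b : R) : b <= x -> a <= y -> y <= x ->
  `|x - y| + `|b - a| <= `|x - a| + `|b - y|.
Proof.
move=> bx ay yx.
rewrite (ger0_norm (_ : 0 <= x - y)) ?subr_ge0 // (ger0_norm (_ : 0 <= x - a)) ?subr_ge0 //;
  last exact: le_trans ay yx.
have := ler_distD y b a; rewrite (ger0_norm (_ : 0 <= y - a)) ?subr_ge0 // distrC.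
lra.
Qed.

Lemma sort_perm (R : realType) (s t : seq R) : perm_eq s t -> sort <=%R s = sort <=%R t.
Proof. by move/perm_sort_leP. Qed.

Lemma sortL_step (R : realType) n (P : seq (R * R)) x a :
  size P = n.+1 -> (x, a) \in P -> (forall q, q \in P -> q.1 <= x /\ q.2 <= x) ->
  (forall Q : seq (R * R), size Q = n -> sortL_stmt Q) -> sortL_stmt P.
Proof.
move=> sP xaP Hx IH.
have P0 : P != [::] by apply/eqP => e; move: sP; rewrite e.
have [[b y] byP Hy] := exists_max (fun q : R * R => q.2) P0.
have [Q [sQ [p1 [p2 [c [aQ1 aQ2]]]]]] : exists Q : seq (R * R), size Q = n /\
   perm_eq (unzip1 P) (x :: unzip1 Q) /\ perm_eq (unzip2 P) (y :: unzip2 Q) /\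
   `|x - y| + pcost Q <= pcost P /\ all (fun z => z <= x) (unzip1 Q) /\
   all (fun z => z <= y) (unzip2 Q).
  have pP := perm_to_rem xaP.
  case: (eqVneq (b, y) (x, a)) => [e | neq].
    move: e => /eqP; rewrite xpair_eqE => /andP[/eqP eb /eqP ey].
    rewrite ey in Hy *; exists (rem (x, a) P); split; first by rewrite size_rem // sP.
    split; first by have := perm_map fst pP.
    split; first by have := perm_map snd pP.
    split; first by rewrite /pcost (perm_big _ pP) big_cons.
    split; apply/allP => z /mapP [q /mem_rem qP ->]; [exact: (Hx q qP).1|exact: Hy].
  have byR : (b, y) \in rem (x, a) P by apply: rem_mem.
  set Q2 := rem (b, y) (rem (x, a) P).
  have pP2 : perm_eq P ((x, a) :: (b, y) :: Q2).
    by apply: perm_trans pP _; rewrite perm_cons; exact: perm_to_rem.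
  have Q2P : forall q, q \in Q2 -> q \in P by move=> q /mem_rem /mem_rem.
  exists ((b, a) :: Q2); split.
    by move: (perm_size pP2); rewrite sP /= => -[].
  split; first by have := perm_map fst pP2.
  split.
    apply: perm_trans (perm_map snd pP2) _ => /=.
    by rewrite -[[:: a, y & _]]/([:: a] ++ [:: y] ++ _) perm_catCA.
  split.
    rewrite /pcost (perm_big _ pP2) !big_cons /=.
    have bx := (Hx _ byP).1; have ay : a <= y by exact: (Hy _ xaP).
    have yx := (Hx _ byP).2.
    have := four_term bx ay yx; lra.
  split; apply/allP => z /mapP [q]; rewrite in_cons => /orP[/eqP -> -> /=|/Q2P qP ->].
  - exact: (Hx _ byP).1.
  - exact: (Hx q qP).1.
  - exact: (Hy _ xaP).
  - exact: Hy.
rewrite /sortL_stmt (sort_perm p1) (sort_perm p2) !sort_cons_max //.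
rewrite zip_rcons ?size_sort ?size_map // pcost_rcons /=.
have := IH Q sQ; rewrite /sortL_stmt; lra.
Qed.

Definition swp (R : realType) (p : R * R) := (p.2, p.1).

Lemma pcost_swap (R : realType) (P : seq (R * R)) : pcost (map (@swp R) P) = pcost P.
Proof. by rewrite /pcost big_map; apply: eq_bigr => p _; rewrite distrC. Qed.

Lemma zip_swap (R : realType) (s t : seq R) : zip t s = map (@swp R) (zip s t).
Proof. by elim: s t => [|a s IH] [|b t] //=; rewrite IH. Qed.

Lemma sortL (R : realType) (P : seq (R * R)) : sortL_stmt P.
Proof.
move Hn : (size P) => n; elim: n P Hn => [|n IH] P sP.
  by case: P sP => //; rewrite /sortL_stmt /pcost !big_nil.
have P0 : P != [::] by apply/eqP => e; move: sP; rewrite e.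
have [p0 p0P Hp] := exists_max (fun q : R * R => Num.max q.1 q.2) P0.
case: (lerP p0.2 p0.1) => h.
  apply: (@sortL_step R n P p0.1 p0.2) => //; first by case: p0 p0P {Hp h}.
  move=> q /Hp; rewrite (max_idPl h) => H; split; apply: le_trans H; by rewrite le_max lexx ?orbT.
have := @sortL_step R n (map (@swp R) P) p0.2 p0.1.
rewrite size_map; move/(_ sP).
have -> : (p0.2, p0.1) \in map (@swp R) P by apply/mapP; exists p0.
move/(_ isT).
have H : forall q, q \in map (@swp R) P -> q.1 <= p0.2 /\ q.2 <= p0.2.
  move=> q /mapP [q' /Hp]; rewrite (max_idPr (ltW h)) => H -> /=; split; apply: le_trans H; by rewrite le_max lexx ?orbT.
move/(_ H IH); rewrite /sortL_stmt pcost_swap.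
have -> : unzip1 (map (@swp R) P) = unzip2 P by rewrite /unzip1 /unzip2 -map_comp.
have -> : unzip2 (map (@swp R) P) = unzip1 P by rewrite /unzip1 /unzip2 -map_comp.
by rewrite zip_swap pcost_swap.
Qed.


Lemma size_pad (R : realType) d n (z : 'rV[R]_d) (X : seq 'rV[R]_d) :
  (size X <= n)%N -> size (pad n z X) = n.
Proof. by move=> h; rewrite /pad size_cat size_nseq subnKC. Qed.

Lemma map_nth_enum (T : Type) (x0 : T) n (s : seq T) : size s = n ->
  [seq nth x0 s (val j) | j <- enum 'I_n] = s.
Proof.
move=> <-; have -> : [seq nth x0 s (val j) | j <- enum 'I_(size s)] =
   map (nth x0 s) (map val (enum 'I_(size s))) by rewrite -map_comp.
by rewrite val_enum_ord; exact: mkseq_nth.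
Qed.

Lemma sum_nth_zip (R : realType) n (s t : seq R) (F : R -> R -> R) :
  size s = n -> size t = n ->
  \sum_(i < n) F (nth 0 s i) (nth 0 t i) = \sum_(p <- zip s t) F p.1 p.2.
Proof.
move=> ss st; rewrite (big_nth (0, 0)) size_zip ss st minnn big_mkord.
by apply: eq_bigr => i _; rewrite nth_zip ?ss ?st.
Qed.

Lemma dot_diff_le (R : realType) d (a x y : 'rV[R]_d) : enorm a <= 1 ->
  `|dotv a x - dotv a y| <= l1norm (x - y).
Proof.
move=> /enorm_le1 Ha; rewrite /dotv /l1norm -sumrB.
apply: le_trans (ler_norm_sum _ _ _) _; apply: ler_sum => k _.
rewrite -mulrBr normrM !mxE -[X in _ <= X]mul1r; apply: ler_pM => //.
Qed.

Lemma nb_le1 (R : realType) n (b : 'rV[R]_n) : enorm b = 1 -> forall i, `|b ord0 i| <= 1.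
Proof. by move=> e; apply: enorm_le1; rewrite e. Qed.

Lemma Sz_diff (R : realType) d n (z : 'rV[R]_d) X Y a (b : 'rV[R]_n) :
  Sz n z X a b - Sz n z Y a b =
  \sum_(i < n) b ord0 i * (nth 0 (sort <=%R [seq dotv a x | x <- pad n z X]) i -
                            nth 0 (sort <=%R [seq dotv a x | x <- pad n z Y]) i).
Proof. by rewrite /Sz -sumrB; apply: eq_bigr => i _; rewrite mulrBr. Qed.

Lemma perm_sigma (T : eqType) n (s : seq T) (x0 : T) (sg : 'S_n) : size s = n ->
  perm_eq [seq nth x0 s (val (sg j)) | j <- enum 'I_n] s.
Proof.
move=> ss.
have -> : [seq nth x0 s (val (sg j)) | j <- enum 'I_n] =
          [seq nth x0 s (val j) | j <- [seq sg j | j <- enum 'I_n]].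
  exact: (map_comp (fun j : 'I_n => nth x0 s (val j)) sg (enum 'I_n)).
rewrite -[X in perm_eq _ X](map_nth_enum x0 ss); apply: perm_map.
apply: uniq_perm; first by rewrite map_inj_uniq ?enum_uniq //; exact: perm_inj.
  exact: enum_uniq.
by move=> j; rewrite mem_enum; apply/mapP; exists (sg^-1 j)%g; rewrite ?mem_enum ?permKV.
Qed.

Lemma part1 (R : realType) d n (z : 'rV[R]_d) X Y a (b : 'rV[R]_n) :
  (size X <= n)%N -> (size Y <= n)%N -> enorm a = 1 -> enorm b = 1 ->
  `|Sz n z X a b - Sz n z Y a b| <= W1z n z X Y.
Proof.
move=> sX sY na nb.
set xs := pad n z X; set ys := pad n z Y.
have sxs : size xs = n by exact: size_pad.
have sys : size ys = n by exact: size_pad.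
set su := sort <=%R [seq dotv a x | x <- xs]; set sv := sort <=%R [seq dotv a x | x <- ys].
have ssu : size su = n by rewrite size_sort size_map.
have ssv : size sv = n by rewrite size_sort size_map.
have H1 : `|Sz n z X a b - Sz n z Y a b| <= pcost (zip su sv).
  rewrite Sz_diff /pcost -(sum_nth_zip (fun u v => `|u - v|) ssu ssv).
  apply: le_trans (ler_norm_sum _ _ _) _; apply: ler_sum => i _.
  rewrite normrM -[X in _ <= X]mul1r; apply: ler_pM => //; exact: nb_le1.
have Hs : forall sg : 'S_n, pcost (zip su sv) <= W1cost z xs ys sg.
  move=> sg.
  pose P := [seq (dotv a (nth z xs (val j)), dotv a (nth z ys (val (sg j)))) | j <- enum 'I_n].
  have e1 : unzip1 P = [seq dotv a x | x <- xs].
    rewrite /unzip1 -map_comp -[in RHS](map_nth_enum z sxs) -map_comp //.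
  have e2 : perm_eq (unzip2 P) [seq dotv a x | x <- ys].
    have -> : unzip2 P = map (dotv a) [seq nth z ys (val (sg j)) | j <- enum 'I_n].
      by rewrite /unzip2 -!map_comp.
    by apply: perm_map; exact: perm_sigma.
  have := sortL P; rewrite /sortL_stmt e1 (sort_perm e2) -/su -/sv => H.
  apply: le_trans H _; rewrite /pcost /W1cost big_map big_enum /=.
  apply: ler_sum => j _; apply: dot_diff_le; rewrite na.
  done.
apply: le_trans H1 _; rewrite /W1z /W1; apply: le_bigmin => [|sg _]; exact: Hs.
Qed.


Lemma W1_le_cost (R : realType) d n (z : 'rV[R]_d) (xs ys : seq 'rV[R]_d) (s : 'S_n) :
  W1 n z xs ys <= W1cost z xs ys s.
Proof. rewrite /W1. exact: bigmin_le. Qed.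

Lemma W1_le_match (R : realType) d n (z : 'rV[R]_d) (xs ys xs' ys' : seq 'rV[R]_d) :
  size xs = n -> size ys = n -> perm_eq xs' xs -> perm_eq ys' ys ->
  W1 n z xs ys <= \sum_(i < n) l1norm (nth z xs' i - nth z ys' i).
Proof.
move=> sx sy px py.
have tx : size xs == n by rewrite sx.
have ty : size ys == n by rewrite sy.
have /tuple_permP [p ep] : perm_eq xs' (Tuple tx) by [].
have /tuple_permP [q eq] : perm_eq ys' (Tuple ty) by [].
have nx : forall i : 'I_n, nth z xs' i = nth z xs (p i).
  by move=> i; rewrite ep -tnth_nth tnth_mktuple (tnth_nth z).
have ny : forall i : 'I_n, nth z ys' i = nth z ys (q i).
  by move=> i; rewrite eq -tnth_nth tnth_mktuple (tnth_nth z).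
apply: le_trans (W1_le_cost z xs ys (p^-1 * q)%g) _.
rewrite /W1cost (reindex_inj (@perm_inj _ p)) /=.
rewrite le_eqVlt; apply/orP; left; apply/eqP/eq_bigr => i _; by rewrite nx ny permM permK.
Qed.

Lemma dotvZ (R : realType) d (c : R) (x v : 'rV[R]_d) : dotv (c *: x) v = c * dotv x v.
Proof. by rewrite /dotv mulr_sumr; apply: eq_bigr => k _; rewrite mxE mulrA. Qed.

Lemma dotvB (R : realType) d (a u v : 'rV[R]_d) : dotv a (u - v) = dotv a u - dotv a v.
Proof. by rewrite /dotv -sumrB; apply: eq_bigr => k _; rewrite !mxE mulrBr. Qed.

Lemma l1_le_mx (R : realType) d (v : 'rV[R]_d) : l1norm v <= d%:R * mx v.
Proof.
rewrite /l1norm; apply: le_trans (_ : \sum_(k < d) mx v <= _).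
  by apply: ler_sum => k _; exact: mx_ge.
by rewrite sumr_const card_ord mulr_natl.
Qed.

Lemma scale_ge (R : realType) d (x v : 'rV[R]_d) : 0 < enorm x <= 1 ->
  `|dotv x v| <= `|dotv ((enorm x)^-1 *: x) v|.
Proof.
move=> /andP[h0 h1]; rewrite dotvZ normrM -[X in X <= _]mul1r.
have e : 0 <= (enorm x)^-1 by rewrite invr_ge0 ltW.
by apply: ler_wpM2r => //; rewrite ger0_norm // invf_ge1.
Qed.

Lemma La (R : realType) d n (z : 'rV[R]_d) (xs ys : seq 'rV[R]_d) (a : 'rV[R]_d) (t : R) :
  size xs = n -> size ys = n -> 0 <= t ->
  (forall u v, u \in xs -> v \in ys -> t * mx (u - v) <= `|dotv a (u - v)|) ->
  t / d%:R * W1 n z xs ys <=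
  \sum_(i < n) `|nth 0 (sort <=%R [seq dotv a x | x <- xs]) i -
                 nth 0 (sort <=%R [seq dotv a x | x <- ys]) i|.
Proof.
move=> sx sy t0 H.
rewrite !sort_map.
set xs' := sort _ xs; set ys' := sort _ ys.
have px : perm_eq xs' xs by rewrite perm_sort.
have py : perm_eq ys' ys by rewrite perm_sort.
have sx' : size xs' = n by rewrite size_sort.
have sy' : size ys' = n by rewrite size_sort.
have d0 : 0 <= t / d%:R by rewrite divr_ge0.
apply: le_trans (ler_wpM2l d0 (W1_le_match z sx sy px py)) _.
rewrite mulr_sumr; apply: ler_sum => i _.
rewrite !(nth_map z) ?sx' ?sy' // -dotvB.
have ux : nth z xs' i \in xs by rewrite -(perm_mem px) mem_nth ?sx'.
have vy : nth z ys' i \in ys by rewrite -(perm_mem py) mem_nth ?sy'.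
apply: le_trans (H _ _ ux vy).
case: (posnP d) => [d0'|dp].
  have -> : (d%:R : R) = 0 by rewrite d0'.
  by rewrite invr0 mulr0 mul0r mulr_ge0 ?mx_ge0.
rewrite mulrAC ler_pdivrMr ?ltr0n // mulrC -mulrA [X in _ <= X]mulrC; apply: ler_wpM2r => //.
by rewrite mulrC; exact: l1_le_mx.
Qed.

Lemma Lb (R : realType) n (w y : 'rV[R]_n) (t : R) : 0 <= t ->
  0 < enorm y <= 1 -> t * mx w <= `|dotv y w| ->
  t / n%:R * \sum_(i < n) `|w ord0 i| <= `|dotv ((enorm y)^-1 *: y) w|.
Proof.
move=> t0 ny H; apply: le_trans (scale_ge w ny); apply: le_trans H.
case: (posnP n) => [n0|np].
  have -> : (n%:R : R) = 0 by rewrite n0.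
  by rewrite invr0 mulr0 mul0r mulr_ge0 ?mx_ge0.
rewrite mulrAC ler_pdivrMr ?ltr0n // mulrC -mulrA [X in _ <= X]mulrC; apply: ler_wpM2r => //.
by rewrite mulrC; exact: l1_le_mx.
Qed.

Lemma unif_ge0 (R : realType) m (h : 'rV[R]_m -> \bar R) :
  (forall x, (0 <= h x)%E) -> (0 <= unif_sphere_E h)%E.
Proof.
move=> h0; rewrite /unif_sphere_E; apply: mule_ge0.
  by apply: lebRn_ge0 => x; case: ifP.
by rewrite lee_fin invr_ge0 fine_ge0 // lebRn_ge0 // => x; case: ifP.
Qed.

Lemma part2 (R : realType) n' d' (p : R) (z : 'rV[R]_d'.+1) : 1 <= p ->
  exists c : R, 0 < c /\ forall X Y : seq 'rV[R]_d'.+1,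
    (size X <= n'.+1)%N -> (size Y <= n'.+1)%N -> 0 < W1z n'.+1 z X Y ->
    ((c `^ p)%:E <= E_ab d'.+1 n'.+1 (fun (a : 'rV[R]_d'.+1) (b : 'rV[R]_n'.+1) =>
        ((`|Sz n'.+1 z X a b - Sz n'.+1 z Y a b| / W1z n'.+1 z X Y) `^ p)%:E))%E.
Proof.
move=> p1.
set n := n'.+1; set d := d'.+1.
set ta := gtau R d' (n * n); set ra := grho R d' (n * n).
set tb := gtau R n' 1; set rb := grho R n' 1.
have ta0 : 0 < ta := gtau_gt0 R d' (n * n).
have ra0 : 0 < ra := grho_gt0 R d' (n * n).
have tb0 : 0 < tb := gtau_gt0 R n' 1.
have rb0 : 0 < rb := grho_gt0 R n' 1.
set c0 := ta / d%:R * (tb / n%:R).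
have c00 : 0 < c0 by rewrite /c0 mulr_gt0 // divr_gt0 // ltr0n.
set V := rb ^+ n / 2 ^+ n * ra ^+ d / 2 ^+ d.
have two0 : forall k, (0 : R) < 2 ^+ k by move=> k; apply: exprn_gt0.
have V0 : 0 < V.
  rewrite /V; apply: divr_gt0 => //; apply: mulr_gt0; last exact: exprn_gt0.
  by apply: divr_gt0 => //; exact: exprn_gt0.
have p0 : 0 <= p by lra.
exists (c0 * V `^ p^-1); split; first by rewrite mulr_gt0 // powR_gt0.
move=> X Y sX sY W0.
have -> : (c0 * V `^ p^-1) `^ p = (c0 `^ p * rb ^+ n / 2 ^+ n) * ra ^+ d / 2 ^+ d.
  rewrite powRM ?ltW ?powR_gt0 // -powRrM mulVf ?powRr1 ?ltW //; last by rewrite gt_eqF //; lra.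
  by rewrite /V !mulrA.
set W := W1z n z X Y.
set xs := pad n z X; set ys := pad n z Y.
have sxs : size xs = n by exact: size_pad.
have sys : size ys = n by exact: size_pad.
pose wa (ij : 'I_n * 'I_n) := nth z xs ij.1 - nth z ys ij.2.
have cI : (#|{: 'I_n * 'I_n}| <= n * n)%N by rewrite card_prod !card_ord.
have [ga Hga] := @grid R d' (n * n) _ wa cI.
rewrite /E_ab; apply: (unif_lb (lo := gpt ga)) => //.
- by rewrite divr_ge0 ?mulr_ge0 ?powR_ge0 ?exprn_ge0 // ltW.
- by move=> x; apply: unif_ge0 => y; rewrite lee_fin powR_ge0.
move=> x Hx; have nx := gbox_norm Hx; split; first by case/andP: nx.
set a := (enorm x)^-1 *: x.
set su := sort <=%R [seq dotv a u | u <- xs]; set sv := sort <=%R [seq dotv a u | u <- ys].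
have Hgood : forall u v, u \in xs -> v \in ys -> ta * mx (u - v) <= `|dotv a (u - v)|.
  move=> u v ux vy.
  have iu : (index u xs < n)%N by rewrite -sxs index_mem.
  have iv : (index v ys < n)%N by rewrite -sys index_mem.
  have := Hga x Hx (Ordinal iu, Ordinal iv); rewrite /wa /= !nth_index // => H.
  exact: le_trans H (scale_ge _ nx).
have HLa := La z sxs sys (ltW ta0) Hgood.
pose wv : 'rV[R]_n := \row_i (nth 0 su i - nth 0 sv i).
have cU : (#|{: unit}| <= 1)%N by rewrite card_unit.
have [gb Hgb] := @grid R n' 1 _ (fun _ : unit => wv) cU.
apply: (unif_lb (lo := gpt gb)) => //.
- by rewrite powR_ge0.
- by move=> y; rewrite lee_fin powR_ge0.
move=> y Hy; have ny := gbox_norm Hy; split; first by case/andP: ny.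
have key : c0 <= `|Sz n z X a ((enorm y)^-1 *: y) - Sz n z Y a ((enorm y)^-1 *: y)| / W.
  rewrite ler_pdivlMr // Sz_diff.
  have -> : \sum_(i < n) ((enorm y)^-1 *: y) ord0 i *
      (nth 0 (sort <=%R [seq dotv a x0 | x0 <- pad n z X]) i -
       nth 0 (sort <=%R [seq dotv a x0 | x0 <- pad n z Y]) i) =
      dotv ((enorm y)^-1 *: y) wv by rewrite /dotv; apply: eq_bigr => i _; rewrite [wv _ _]mxE.
  have Hb := Lb (ltW tb0) ny (Hgb y Hy tt).
  apply: le_trans Hb.
  have -> : \sum_(i < n) `|wv ord0 i| = \sum_(i < n) `|nth 0 su i - nth 0 sv i|.
    by apply: eq_bigr => i _; rewrite mxE.
  have -> : c0 * W = tb / n%:R * (ta / d%:R * W) by rewrite /c0; ring.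
  apply: ler_wpM2l; first by rewrite divr_ge0 // ltW.
  exact: HLa.
rewrite lee_fin; apply: ge0_ler_powR => //; rewrite nnegrE; first exact: ltW.
exact: le_trans (ltW c00) key.
Qed.

Theorem mainTheorem4 (R : realType) (n d : nat) (p : R)
  (Omega : set 'rV[R]_d) (z : 'rV[R]_d) :
  (1 <= n)%N -> (1 <= d)%N -> 1 <= p ->
  compact Omega -> ~ Omega z ->
  (* uniformly Lipschitz *)
  (exists L : R, forall (a : 'rV[R]_d) (b : 'rV[R]_n), sphere d a -> sphere n b ->
     forall X X' : seq 'rV[R]_d, multiset_le n Omega X -> multiset_le n Omega X' ->
       `|Sz n z X a b - Sz n z X' a b| <= L * W1z n z X X')
  /\
  (* lower Lipschitz in expectation *)
  (exists c : R, 0 < c /\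
     forall X X' : seq 'rV[R]_d, multiset_le n Omega X -> multiset_le n Omega X' ->
       0 < W1z n z X X' ->
       ((c `^ p)%:E <=
        E_ab d n (fun (a : 'rV[R]_d) (b : 'rV[R]_n) =>
                ((`|Sz n z X a b - Sz n z X' a b| / W1z n z X X') `^ p)%:E))%E).
Proof.
move: Omega z; case: d => [|d'] Omega z; case: n => [|n'] //= n1 d1 p1 _ _.
split.
  exists 1 => a b na nb X X' [sX _] [sY _]; rewrite mul1r.
  by apply: part1 => //.
have [c [c0 Hc]] := part2 n' z p1.
by exists c; split => // X X' [sX _] [sY _] W0; apply: Hc.
Qed.
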